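(* Let $m\in\mathbb{N}$ with $m\ge1$. If $m\not\equiv 6\pmod{12}$, then the friendship graph $F_j$ is $\mathbb{Z}_m$-cordial for all $0\le j\le\lfloor m/3\rfloor$. If $m\equiv 6\pmod{12}$, then $F_j$ is $\mathbb{Z}_m$-cordial for all $0\le j\le\lfloor m/3\rfloor-1$.
   Context: Graphs are finite, simple and undirected. For $n\in\mathbb{N}$, the friendship graph $F_n$ is the union of $n$ copies of the triangle $C_3$ joined at a single common (central) vertex. For an abelian group $A$ and a graph $G=(V,E)$, a vertex labeling $\ell:V\to A$ induces an edge labeling $\ell(\{v_1,v_2\})=\ell(v_1)+\ell(v_2)$. Let $f_V(a)=|\{v\in V:\ell(v)=a\}|$ and $f_E(a)=|\{e\in E:\ell(e)=a\}|$. The labeling is $A$-cordial if $|f_V(a_1)-f_V(a_2)|\le 1$ and $|f_E(a_1)-f_E(a_2)|\le 1$ for all $a_1,a_2\in A$; $G$ is $A$-cordial if it admits an $A$-cordial labeling. *)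

(* Defs.v *)
From mathcomp Require Import all_boot all_order all_algebra.
Set Implicit Arguments. Unset Strict Implicit. Unset Printing Implicit Defensive.
Import GRing.Theory.
Local Open Scope ring_scope.

Definition edges (T : finType) (adj : rel T) : {set {set T}} :=
  [set [set p.1; p.2] | p in [set p : T * T | adj p.1 p.2]].

Definition fV (A : finZmodType) (T : finType) (l : T -> A) (a : A) : nat :=
  #|[set v : T | l v == a]|.

Definition fE (A : finZmodType) (T : finType) (adj : rel T) (l : T -> A) (a : A) : nat :=
  #|[set e in edges adj |
     [exists x : T, exists y : T,
        [&& e == [set x; y], x != y & l x + l y == a]]]|.

Definition cordial_labeling (A : finZmodType) (T : finType) (adj : rel T) (l : T -> A) :=
  forall a1 a2 : A,
    [/\ (fV l a1 <= fV l a2 + 1)%N, (fV l a2 <= fV l a1 + 1)%N,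
        (fE adj l a1 <= fE adj l a2 + 1)%N & (fE adj l a2 <= fE adj l a1 + 1)%N].

Definition cordial (A : finZmodType) (T : finType) (adj : rel T) : Prop :=
  exists l : T -> A, cordial_labeling adj l.

(* Friendship graph F_n: center None, triangle i has outer vertices Some (i,false), Some (i,true). *)
Definition fr_vert (n : nat) : finType := option ('I_n * bool)%type.

Definition fr_adj (n : nat) : rel (fr_vert n) := fun x y =>
  match x, y with
  | None, None => false
  | None, Some _ => true
  | Some _, None => true
  | Some (i, b), Some (j, c) => (i == j) && (b != c)
  end.

(* Z_m for m >= 1: 'I_(m.-1).+1 = 'I_m with its canonical additive group structure *)
Definition Zm (m : nat) : finZmodType := 'I_(m.-1).+1.

(* Main.v *)
Require Import Defs.
From mathcomp Require Import all_boot all_order all_algebra.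
From mathcomp Require Import zify.
Set Implicit Arguments. Unset Strict Implicit. Unset Printing Implicit Defensive.

Definition E (X Y : nat -> nat) (i r : nat) : nat :=
  if r == 0 then X i else if r == 1 then Y i else X i + Y i.

Definition good (m K : nat) (X Y : nat -> nat) : Prop :=
  [/\ (forall i, i < K -> X i %% m <> 0 /\ Y i %% m <> 0),
      (forall i j, i < K -> j < K -> X i %% m <> Y j %% m) &
      (forall i j r s, i < K -> j < K -> r < 3 -> s < 3 ->
          E X Y i r %% m = E X Y j s %% m -> i = j /\ r = s)].

Lemma good_mono m K K' X Y : K' <= K -> good m K X Y -> good m K' X Y.
Proof.
move=> le [h1 h2 h3]; split.
- move=> i Hi; apply: h1; lia.
- move=> i j Hi Hj; apply: h2; lia.
- move=> i j r s Hi Hj; apply: h3; lia.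
Qed.

Lemma mod_small_inj m a b : 0 < a <= m -> 0 < b <= m -> a %% m = b %% m -> a = b.
Proof.
move=> Ha Hb.
have Hm : forall c, 0 < c <= m -> c %% m = if c == m then 0 else c.
  move=> c Hc; case: eqP => [->|ne]; first by rewrite modnn.
  by rewrite modn_small //; lia.
rewrite (Hm _ Ha) (Hm _ Hb); do 2 case: eqP => //; lia.
Qed.

Lemma mod_small_nz m a : 0 < a < m -> a %% m <> 0.
Proof. by move=> Ha; rewrite modn_small; lia. Qed.


Lemma int_good m K X Y :
  (forall i, i < K -> [/\ 0 < X i, 0 < Y i & X i + Y i <= m]) ->
  (forall i j r s, i < K -> j < K -> r < 3 -> s < 3 ->
     E X Y i r = E X Y j s -> i = j /\ r = s) -> good m K X Y.
Proof.
move=> B I; split.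
- move=> i Hi; have [? ? ?] := B i Hi; split; apply: mod_small_nz; lia.
- move=> i j Hi Hj; have [? ? ?] := B j Hj; have [? ? ?] := B i Hi; move=> /mod_small_inj.
  move: (I i j 0 1 Hi Hj isT isT); rewrite /E /=; lia.
- move=> i j r s Hi Hj Hr Hs; have := B j Hj; have := B i Hi.
  move=> [? ? ?] [? ? ?] /mod_small_inj H; apply: I => //; apply: H;
  (case: r Hr => [|[|[|r]]] //= _; case: s Hs => [|[|[|s]]] //= _; rewrite /E /=; lia).
Qed.

Definition nY K i := if i %% 2 == 0 then K + K.+1 %/ 2 - i %/ 2
  else K + 2 * (K.+1 %/ 2) + K %/ 2 + 1 - i.+1 %/ 2.

Lemma nest_good m K : 3 * K + 1 <= m -> good m K succn (nY K).
Proof.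
move=> Hm; apply: int_good.
  by move=> i Hi; rewrite /nY; case: ifP => ?; split; lia.
move=> i j r s Hi Hj Hr Hs; rewrite /E /nY.
case: r Hr => [|[|[|r]]] //= _; case: s Hs => [|[|[|s]]] //= _;
repeat (case: ifP => ?); lia.
Qed.

(* Skolem construction, m = 12 s, s >= 2 *)
Definition skp s d :=
  if d %% 2 == 0 then 6 * s - d %/ 2
  else if d == 1 then s
  else if d == 2 * s - 1 then 2 * s
  else if d == 4 * s - 1 then 2 * s + 1
  else if d <= 2 * s - 3 then s + 1 + (2 * s - 1 - d) %/ 2
  else (4 * s - 1 - d) %/ 2.

Definition skY s i := 4 * s + skp s i.+1.

Lemma sk_good s : 2 <= s -> good (12 * s) (4 * s) succn (skY s).
Proof.
move=> Hs; apply: int_good.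
  by move=> i Hi; rewrite /skY /skp; repeat (case: ifP => ?); split; lia.
move=> i j r t Hi Hj Hr Ht; rewrite /E /skY /skp.
case: r Hr => [|[|[|r]]] //= _; case: t Ht => [|[|[|t]]] //= _;
repeat (case: ifP => ?); lia.
Qed.

Definition y12 i := nth 0 [:: 5; 8; 9; 7] i.

Lemma g12 : good 12 4 succn y12.
Proof.
apply: int_good.
  by move=> i; case: i => [|[|[|[|i]]]] //= _; split.
move=> i j r s; rewrite /E.
case: i => [|[|[|[|i]]]] //= _; case: j => [|[|[|[|j]]]] //= _;
case: r => [|[|[|r]]] //= _; case: s => [|[|[|s]]] //= _; lia.
Qed.

Lemma mod_lt2 n k : n < 2 * k -> n %% k = if n < k then n else n - k.
Proof.
case: ifP => H1 H2; first by rewrite modn_small.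
have -> : n = (n - k) + k by lia.
by rewrite modnDr modn_small; lia.
Qed.

Lemma m3_good k : odd k -> good (3 * k) k (fun a => 3 * a + 1) (fun a => 3 * a + 2).
Proof.
move=> Hk.
have Ek : forall i r, i < k -> r < 3 -> E (fun a => 3 * a + 1) (fun a => 3 * a + 2) i r %% (3 * k)
   = if r == 0 then 3 * i + 1 else if r == 1 then 3 * i + 2 else
     3 * (if 2 * i + 1 < k then 2 * i + 1 else 2 * i + 1 - k).
  move=> i r Hi; rewrite /E; case: r => [|[|[|r]]] //= _.
  - by rewrite modn_small; lia.
  - by rewrite modn_small; lia.
  have -> : 3 * i + 1 + (3 * i + 2) = 3 * (2 * i + 1) by lia.
  by rewrite -muln_modr mod_lt2; lia.
have ok : k %% 2 = 1 by rewrite modn2 Hk.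
split.
- move=> i Hi; have := Ek i 0 Hi isT; have := Ek i 1 Hi isT; rewrite /E /=.
  by move=> -> ->; lia.
- move=> i j Hi Hj; have := Ek i 0 Hi isT; have := Ek j 1 Hj isT; rewrite /E /=.
  by move=> -> ->; lia.
- move=> i j r s Hi Hj Hr Hs; rewrite (Ek i r Hi Hr) (Ek j s Hj Hs).
  case: r Hr => [|[|[|r]]] //= _; case: s Hs => [|[|[|s]]] //= _;
  repeat (case: ifP => ?); lia.
Qed.

Definition vx j (X Y : nat -> nat) (v : fr_vert j) : nat :=
  match v with None => 0 | Some (i, b) => if b then Y i else X i end.

Definition lab n j X Y (v : fr_vert j) : Zm n.+1 := inZp (vx X Y v).

Lemma lab_val n j X Y (v : fr_vert j) : val (lab n X Y v) = vx X Y v %% n.+1.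
Proof. by []. Qed.

Lemma lab_add n j X Y (u v : fr_vert j) :
  val ((lab n X Y u + lab n X Y v)%R : Zm n.+1) = (vx X Y u + vx X Y v) %% n.+1.
Proof. by rewrite /= modnDm. Qed.

Definition ecode j (x y : fr_vert j) : nat * nat :=
  match x, y with
  | None, Some (i, b) => (val i, if b then 1 else 0)
  | Some (i, b), None => (val i, if b then 1 else 0)
  | Some (i, _), Some _ => (val i, 2)
  | None, None => (0, 0)
  end.

Lemma ecode_val j X Y (x y : fr_vert j) : fr_adj x y ->
  [/\ vx X Y x + vx X Y y = E X Y (ecode x y).1 (ecode x y).2,
      (ecode x y).1 < j & (ecode x y).2 < 3].
Proof.
case: x => [[i b]|]; case: y => [[i2 b2]|] //=.
- move=> /andP[/eqP <- Hb]; split => //; rewrite /E /=.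
  by case: b b2 Hb => [] [] //= _; rewrite addnC.
- by move=> _; split => //; case: b; rewrite /E /= ?addn0.
- by move=> _; split => //; case: b2; rewrite /E /= ?add0n.
Qed.

Lemma fr_adj_sym j (x y : fr_vert j) : fr_adj x y = fr_adj y x.
Proof.
case: x => [[i b]|]; case: y => [[i2 b2]|] //=.
by rewrite eq_sym (eq_sym b).
Qed.

Lemma ecode_inj j (x y x' y' : fr_vert j) : fr_adj x y -> fr_adj x' y' ->
  ecode x y = ecode x' y' -> [set x; y] = [set x'; y'].
Proof.
case: x => [[i []]|]; case: y => [[i2 []]|] //=;
case: x' => [[i' []]|]; case: y' => [[i2' []]|] //=; rewrite ?andbT ?andbF //;
move=> H1 H2 EE;
repeat (match goal with H : is_true (_ == _) |- _ => move/eqP: H => H; subst end);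
case: EE => //= /val_inj ?; subst => //; by rewrite setUC.
Qed.

Lemma pair_adj j (p1 p2 x y : fr_vert j) :
  [set p1; p2] = [set x; y] -> x != y -> fr_adj p1 p2 -> fr_adj x y.
Proof.
move=> E nxy A.
have /set2P Hx : x \in [set p1; p2] by rewrite E set21.
have /set2P Hy : y \in [set p1; p2] by rewrite E set22.
case: Hx => ?; case: Hy => ?; subst => //; rewrite ?eqxx // in nxy.
by rewrite fr_adj_sym in A.
Qed.


Lemma cordial_of_good n K X Y j : good n.+1 K X Y -> j <= K ->
  cordial (Zm n.+1) (@fr_adj j).
Proof.
move=> [h1 h2 h3] hj; exists (lab n X Y).
have le1 : forall a b : nat, a <= 1 -> b <= 1 -> a <= b + 1 by move=> a b Ha _; apply: leq_trans Ha (leq_addl _ _).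
have ordK : forall i : 'I_j, (i : nat) < K by move=> i; have := ltn_ord i; lia.
have HV : forall a : Zm (S n), (fV (@lab n j X Y) a <= 1)%N.
  move=> a; rewrite /fV leqNgt; apply/negP => /card_gt1P [u [v []]].
  rewrite !inE => /eqP Hu /eqP Hv /eqP; apply.
  have := congr1 val (etrans Hu (esym Hv)); rewrite !lab_val => {Hu Hv}.
  case: u => [[i b]|]; case: v => [[i' b']|] //=.
  + case: b; case: b' => H.
    * by have [/val_inj -> _] := h3 i i' 1 1 (ordK i) (ordK i') isT isT H.
    * by case: (h2 i' i (ordK i') (ordK i)).
    * by case: (h2 i i' (ordK i) (ordK i')).
    * by have [/val_inj -> _] := h3 i i' 0 0 (ordK i) (ordK i') isT isT H.
  + rewrite mod0n => H; have [A B] := h1 i (ordK i).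
    by case: b H => H; [case: (B H) | case: (A H)].
  + rewrite mod0n => H; have [A B] := h1 i' (ordK i').
    by case: b' H => H; [case: (B (esym H)) | case: (A (esym H))].
have HE : forall a : Zm (S n), (fE (@fr_adj j) (@lab n j X Y) a <= 1)%N; last first.
  by move=> a1 a2; split; apply: le1.
  move=> a; rewrite /fV /fE; apply/card_le1_eqP => e1 e2; rewrite !inE.
  have pick : forall e, e \in edges (@fr_adj j) ->
      [exists x, exists y, [&& e == [set x; y], x != y & (lab n X Y x + lab n X Y y)%R == a]] ->
      exists x y, [/\ e = [set x; y], fr_adj x y & (lab n X Y x + lab n X Y y)%R = a].
    move=> e /imsetP [p]; rewrite inE => Ap ->.
    move=> /existsP [x /existsP [y /and3P [/eqP Exy nxy /eqP L]]].
    exists x, y; split => //; exact: (@pair_adj j p.1 p.2 x y Exy nxy Ap).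
  move=> /andP [A1 B1] /andP [A2 B2].
  have [x [y [-> Axy Lxy]]] := pick _ A1 B1.
  have [x' [y' [-> Axy' Lxy']]] := pick _ A2 B2.
  apply: ecode_inj => //.
  have [V1 C1 D1] := ecode_val X Y Axy.
  have [V2 C2 D2] := ecode_val X Y Axy'.
  have : (vx X Y x + vx X Y y) %% n.+1 = (vx X Y x' + vx X Y y') %% n.+1.
    by rewrite -!lab_add Lxy Lxy'.
  rewrite V1 V2 => H.
  have C1' : (ecode x y).1 < K by apply: leq_trans C1 hj.
  have C2' : (ecode x' y').1 < K by apply: leq_trans C2 hj.
  have [Q1 Q2] := h3 _ _ _ _ C1' C2' D1 D2 H.
  by case: (ecode x y) Q1 Q2 => ? ?; case: (ecode x' y') => ? ? /= -> ->.
Qed.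

Theorem corollary9p5 (m : nat) (hm : (1 <= m)%N) :
  (m %% 12 <> 6 -> forall j : nat, (j <= m %/ 3)%N -> cordial (Zm m) (@fr_adj j)) /\
  (m %% 12 = 6 -> forall j : nat, (j <= m %/ 3 - 1)%N -> cordial (Zm m) (@fr_adj j)).
Proof.
case: m hm => [//|n] _; split.
- move=> H6 j hj.
  case: (boolP (n.+1 %% 3 == 0)) => H3; last first.
    apply: (cordial_of_good (K := n.+1 %/ 3) (X := succn) (Y := nY (n.+1 %/ 3))) => //.
    by apply: nest_good; lia.
  case: (boolP (n.+1 %% 2 == 0)) => H2; last first.
    have ok : odd (n.+1 %/ 3).
      have : (n.+1 %/ 3) %% 2 = 1 by lia.
      by rewrite modn2; case: (odd _).
    have G := m3_good ok.
    have e : 3 * (n.+1 %/ 3) = n.+1 by lia.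
    rewrite e in G; exact: cordial_of_good G hj.
  case: (boolP (n.+1 == 12)) => H12.
    rewrite (eqP H12) in hj *.
    exact: cordial_of_good g12 hj.
  have Hs : 2 <= n.+1 %/ 12 by lia.
  have G := sk_good Hs.
  have e : 12 * (n.+1 %/ 12) = n.+1 by lia.
  rewrite e in G; apply: cordial_of_good G _; lia.
- move=> H6 j hj.
  apply: (cordial_of_good (K := n.+1 %/ 3 - 1) (X := succn) (Y := nY (n.+1 %/ 3 - 1))) => //.
  by apply: nest_good; lia.
Qed.
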